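(* Let $f_\Theta$ be a prior probability density on $\mathbb{R}$ with finite mean $\theta_0=\int\theta f_\Theta(\theta)d\theta$. Let $l_\epsilon,l_1,\dots,l_k$ be probability densities on $\mathbb{R}$, $\Delta_1,\dots,\Delta_k\in\mathbb{R}$, and weights $\phi_\epsilon,\phi_1,\dots,\phi_k\in[0,1]$ with $\phi_\epsilon+\sum_{i=1}^k\phi_i=1$ and $\phi_\epsilon>0$. Consider the mixture signal likelihood $$l_{X|\Theta}(x\mid\theta)=\phi_\epsilon\,l_\epsilon(x-\theta)+\sum_{i=1}^k\phi_i\,l_i(x-\Delta_i).$$ Fix $x$ with $J_0(x)=\int f_\Theta(\theta)l_\epsilon(x-\theta)d\theta\in(0,\infty)$ and $\int|\theta| f_\Theta(\theta)l_\epsilon(x-\theta)d\theta<\infty$. Let $\theta_1=\frac{\int\theta f_\Theta(\theta)l_{X|\Theta}(x\mid\theta)d\theta}{\int f_\Theta(\theta)l_{X|\Theta}(x\mid\theta)d\theta}$ be the posterior mean and $\theta_1^{nm}=\frac{\int\theta f_\Theta(\theta)l_\epsilon(x-\theta)d\theta}{J_0(x)}$ the posterior mean under the non-mixture signal with likelihood $l_\epsilon(x-\theta)$. Then $$\theta_1=\alpha(x)\,\theta_1^{nm}+(1-\alpha(x))\,\theta_0,\qquad \alpha(x)=\Bigl(1+\sum_{i=1}^k\frac{\phi_i}{\phi_\epsilon}\frac{l_i(x-\Delta_i)}{J_0(x)}\Bigr)^{-1}\in[0,1].$$ *)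

(* Defs.v *)
From HB Require Import structures.
From mathcomp Require Import all_boot all_order all_algebra.
From mathcomp Require Import all_classical all_reals all_analysis.
Set Implicit Arguments. Unset Strict Implicit. Unset Printing Implicit Defensive.
Import Order.TTheory GRing.Theory Num.Theory.
Local Open Scope ring_scope.

Definition is_density (R : realType) (f : R -> R) : Prop :=
  measurable_fun setT f /\ (forall t, 0 <= f t) /\
  (\int[@lebesgue_measure R]_t (f t)%:E = 1)%E.

Definition RInt (R : realType) (g : R -> R) : R :=
  Rintegral (@lebesgue_measure R) setT g.

Definition mix_lik (R : realType) (k : nat) (phie : R) (phi : 'I_k -> R)
  (le : R -> R) (l : 'I_k -> R -> R) (D : 'I_k -> R) (x th : R) : R :=
  phie * le (x - th) + \sum_(i < k) phi i * l i (x - D i).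

Definition prior_mean (R : realType) (f : R -> R) : R := RInt (fun t => t * f t).

Definition J0 (R : realType) (f le : R -> R) (x : R) : R :=
  RInt (fun t => f t * le (x - t)).

Definition post_mean (R : realType) (k : nat) (f : R -> R) (phie : R)
  (phi : 'I_k -> R) (le : R -> R) (l : 'I_k -> R -> R) (D : 'I_k -> R) (x : R) : R :=
  RInt (fun t => t * f t * mix_lik phie phi le l D x t) /
  RInt (fun t => f t * mix_lik phie phi le l D x t).

Definition post_mean_nm (R : realType) (f le : R -> R) (x : R) : R :=
  RInt (fun t => t * f t * le (x - t)) / J0 f le x.

Definition alpha (R : realType) (k : nat) (f : R -> R) (phie : R)
  (phi : 'I_k -> R) (le : R -> R) (l : 'I_k -> R -> R) (D : 'I_k -> R) (x : R) : R :=
  (1 + \sum_(i < k) (phi i / phie) * (l i (x - D i) / J0 f le x))^-1.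

(* Main.v *)
Require Import Defs.
From HB Require Import structures.
From mathcomp Require Import all_boot all_order all_algebra.
From mathcomp Require Import all_classical all_reals all_analysis.
From mathcomp Require Import measurable_realfun ring.
Import Order.TTheory GRing.Theory Num.Theory.
Local Open Scope ring_scope.

Lemma alg_id (F : fieldType) (a J N S M : F) :
  a != 0 -> J != 0 -> a * J + S != 0 ->
  (a * N + S * M) / (a * J + S) =
  (1 + S / (a * J))^-1 * (N / J) + (1 - (1 + S / (a * J))^-1) * M.
Proof.
move=> a0 J0 h.
have -> : 1 + S / (a * J) = (a * J + S) / (a * J) by field; rewrite a0 J0.
rewrite invf_div; field; rewrite ?h ?a0 ?J0 //.
Qed.

Lemma alg_id2 (F : fieldType) (p a l J : F) : a != 0 -> J != 0 ->
  (p / a) * (l / J) = p * l / (a * J).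
Proof. by move=> a0 J0; field; rewrite ?a0 ?J0. Qed.

Theorem mainTheorem9 (R : realType) (k : nat) (f : R -> R)
  (le : R -> R) (l : 'I_k -> R -> R) (D : 'I_k -> R)
  (phie : R) (phi : 'I_k -> R) (x : R) :
  is_density f ->
  (@lebesgue_measure R).-integrable setT (fun t => (t * f t)%:E) ->
  is_density le ->
  (forall i, is_density (l i)) ->
  0 < phie <= 1 ->
  (forall i, 0 <= phi i <= 1) ->
  phie + \sum_(i < k) phi i = 1 ->
  (0 < \int[@lebesgue_measure R]_t (f t * le (x - t))%:E < +oo)%E ->
  (\int[@lebesgue_measure R]_t (`|t| * f t * le (x - t))%:E < +oo)%E ->
  post_mean f phie phi le l D x =
    alpha f phie phi le l D x * post_mean_nm f le x
    + (1 - alpha f phie phi le l D x) * prior_mean f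
  /\ 0 <= alpha f phie phi le l D x <= 1.
Proof.
move=> [mf [f0 f1]] itf [mle [le0 le1]] hl /andP[phie0 _] hphi _ /andP[J0pos Jfin] Nfin.
set mu := @lebesgue_measure R.
have mlex : measurable_fun setT (fun t : R => le (x - t)).
  apply: (measurableT_comp mle); apply: measurable_realfun.measurable_funB => //.
have mg0 : measurable_fun setT (fun t : R => f t * le (x - t)).
  exact: measurable_realfun.measurable_funM.
have mg1 : measurable_fun setT (fun t : R => t * f t * le (x - t)).
  apply: measurable_realfun.measurable_funM => //; apply: measurable_realfun.measurable_funM => //.
have ig0 : mu.-integrable setT (EFin \o (fun t => f t * le (x - t))).
  apply/integrableP; split; first exact/measurable_EFinP.
  under eq_integral => t _ do rewrite /= ger0_norm ?mulr_ge0//.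
  exact: Jfin.
have ig1 : mu.-integrable setT (EFin \o (fun t => t * f t * le (x - t))).
  apply/integrableP; split; first exact/measurable_EFinP.
  under eq_integral => t _ do rewrite /= !normrM (ger0_norm (f0 t)) (ger0_norm (le0 _)).
  exact: Nfin.
have igf : mu.-integrable setT (EFin \o f).
  apply/integrableP; split; first exact/measurable_EFinP.
  under eq_integral => t _ do rewrite /= ger0_norm//.
  by rewrite f1 ltry.
have itf' : mu.-integrable setT (EFin \o (fun t => t * f t)) by [].
set S := \sum_(i < k) phi i * l i (x - D i).
have S0 : 0 <= S.
  rewrite /S; apply: sumr_ge0 => i _; apply: mulr_ge0.
    by case/andP: (hphi i).
  by case: (hl i) => _ [+ _].
set J := J0 f le x.
have J0' : 0 < J by apply: fine_gt0; rewrite J0pos Jfin.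
set N := RInt (fun t => t * f t * le (x - t)).
set M := prior_mean f.
have F1 : RInt f = 1 by rewrite /RInt /Rintegral f1.
have hnum : RInt (fun t => t * f t * mix_lik phie phi le l D x t) = phie * N + S * M.
  rewrite /RInt.
  have -> : (fun t => t * f t * mix_lik phie phi le l D x t) =
     (fun t => phie * (t * f t * le (x - t)) + S * (t * f t)).
    by apply: funext => t; rewrite /mix_lik -/S; ring.
  rewrite RintegralD //.
  - by rewrite RintegralZl // RintegralZl.
  - by apply: (eq_integrable measurableT _ _ _ (integrableZl measurableT phie ig1)) => t _ /=; rewrite EFinM.
  - by apply: (eq_integrable measurableT _ _ _ (integrableZl measurableT S itf')) => t _ /=; rewrite EFinM.
have hden : RInt (fun t => f t * mix_lik phie phi le l D x t) = phie * J + S.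
  rewrite /RInt.
  have -> : (fun t => f t * mix_lik phie phi le l D x t) =
     (fun t => phie * (f t * le (x - t)) + S * f t).
    by apply: funext => t; rewrite /mix_lik -/S; ring.
  rewrite RintegralD //.
  - rewrite RintegralZl // RintegralZl //; congr (_ * _ + _).
    by have := F1; rewrite /RInt => ->; rewrite mulr1.
  - by apply: (eq_integrable measurableT _ _ _ (integrableZl measurableT phie ig0)) => t _ /=; rewrite EFinM.
  - by apply: (eq_integrable measurableT _ _ _ (integrableZl measurableT S igf)) => t _ /=; rewrite EFinM.
have hsum : \sum_(i < k) (phi i / phie) * (l i (x - D i) / J0 f le x) = S / (phie * J).
  rewrite /S mulr_suml; apply: eq_bigr => i _; rewrite -/J.
  by rewrite alg_id2 ?gt_eqF.
have hA : alpha f phie phi le l D x = (1 + S / (phie * J))^-1 by rewrite /alpha hsum.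
have pJ : 0 < phie * J by rewrite mulr_gt0.
have A1 : 0 < 1 + S / (phie * J) by rewrite ltr_wpDr // divr_ge0 // ltW.
split.
  rewrite /post_mean hnum hden hA /post_mean_nm -/J -/N -/M.
  apply: alg_id; rewrite ?gt_eqF // ltr_wpDr //.
rewrite hA invr_ge0 (ltW A1) /= invf_le1 //.
by rewrite lerDl divr_ge0 // ltW.
Qed.
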